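(* Let $C_\varphi$ be a bounded composition operator on $\mathcal F(\mathbb C^d)$. Let $p\ge2$ and $\lambda\in\mathbb D^p$ with $\lambda_{p-1}=\lambda_p$. Suppose $L_1,\dots,L_p\in\mathcal F(\mathbb C^d)$ are polynomials with $C_\varphi L_i=\lambda_iL_i$ for $i=1,\dots,p-1$ and $C_\varphi L_p=\lambda_{p-1}L_p+L_{p-1}$. Then there is $J\in\mathbb N$ such that for all $j\ge J$, all $n\in\mathbb N$ and all $D\subset\{\alpha\in\mathbb N^p:|\alpha|=n\}$, $$C_\varphi^j\Big(\sum_{\alpha\in D}L^\alpha\Big)=\sum_{\alpha\in\mathbb N^p,\,|\alpha|=n}c(\alpha,D,j)L^\alpha$$ for some complex numbers $c(\alpha,D,j)$ with $|c(\alpha,D,j)|\le1$.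
   Context: $\mathcal F(\mathbb C^d)$ is the Fock space of entire functions with $\|f\|^2=(2\pi)^{-d}\int_{\mathbb C^d}|f|^2e^{-|z|^2/2}dA<\infty$; $C_\varphi f=f\circ\varphi$, bounded iff $\varphi(z)=Az+b$, $\|A\|\le1$, $\langle Av,b\rangle=0$ whenever $|Av|=|v|$. $\mathbb D$ is the open unit disc. For $\alpha\in\mathbb N^p$, $|\alpha|=\sum\alpha_i$ and $L^\alpha=\prod_{i=1}^pL_i^{\alpha_i}$. *)

(* Defs.v *)
From HB Require Import structures.
From mathcomp Require Import all_boot all_order all_algebra.
From mathcomp Require Import mpoly complex.
From mathcomp Require Import reals.
Set Implicit Arguments. Unset Strict Implicit. Unset Printing Implicit Defensive.
Import Order.TTheory GRing.Theory Num.Theory.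
Local Open Scope ring_scope.
Local Open Scope complex_scope.

Definition vnorm2 (R : rcfType) (d : nat) (v : 'cV[R[i]]_d) : R[i] :=
  \sum_(k < d) `|v k 0| ^+ 2.

Definition hdot (R : rcfType) (d : nat) (u w : 'cV[R[i]]_d) : R[i] :=
  \sum_(k < d) u k 0 * (w k 0)^*.

(* The affine symbol phi(z) = A z + b gives a bounded composition operator on
   the Fock space F(C^d) iff ||A|| <= 1 and <Av, b> = 0 whenever |Av| = |v|
   (characterization recalled in the paper's context). *)
Definition fock_bounded_symbol (R : rcfType) (d : nat)
    (A : 'M[R[i]]_d) (b : 'cV[R[i]]_d) : Prop :=
  (forall v : 'cV[R[i]]_d, vnorm2 (A *m v) <= vnorm2 v) /\
  (forall v : 'cV[R[i]]_d, vnorm2 (A *m v) = vnorm2 v -> hdot (A *m v) b = 0).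

Definition affine_coords (R : rcfType) (d : nat)
    (A : 'M[R[i]]_d) (b : 'cV[R[i]]_d) : d.-tuple {mpoly R[i][d]} :=
  [tuple (\sum_(j < d) A k j *: 'X_j + (b k 0)%:MP) | k < d].

Definition Cphi (R : rcfType) (d : nat) (A : 'M[R[i]]_d) (b : 'cV[R[i]]_d)
    (f : {mpoly R[i][d]}) : {mpoly R[i][d]} :=
  comp_mpoly (affine_coords A b) f.

(* L^alpha = prod_i L_i^(alpha_i)  (indices 0-based). *)
Definition Lpow (R : rcfType) (d p : nat) (L : nat -> {mpoly R[i][d]})
    (alpha : 'X_{1..p}) : {mpoly R[i][d]} :=
  \prod_(k < p) L k ^+ alpha k.

(* Main.v *)
Require Import Defs.
From HB Require Import structures.
From mathcomp Require Import all_boot all_order all_algebra.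
From mathcomp Require Import mpoly complex.
From mathcomp Require Import reals.
From mathcomp Require Import ring lra zify.
Import Order.TTheory GRing.Theory Num.Theory.
Local Open Scope ring_scope.
Local Open Scope complex_scope.

Lemma split_big (T : Type) (idx : T) (op : Monoid.com_law idx) p' (f : 'I_p'.+2 -> T) :
  \big[op/idx]_k f k = op (f ord_max) (op (f (inord p'))
     (\big[op/idx]_(k | (k != ord_max) && (k != inord p')) f k)).
Proof.
have qr : (inord p' : 'I_p'.+2) != ord_max.
  by apply/eqP => /(congr1 val) /=; rewrite inordK //; lia.
rewrite (bigD1 ord_max) //=; congr (op _ _).
by rewrite (bigD1 (inord p')) //=.
Qed.

Definition sh p' (a : 'X_{1..p'.+2}) (m : nat) : 'X_{1..p'.+2} :=
  [multinom (if i == ord_max then (a i - m)%N else if i == inord p' then (a i + m)%N else a i) | i < p'.+2].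

Arguments sh {p'}.

Definition wc (R : rcfType) p' (mu : nat -> R[i]) (nu om : R[i]) (a : 'X_{1..p'.+2}) (m : nat) : R[i] :=
  ('C(a ord_max, m))%:R * nu ^+ (a ord_max - m) * om ^+ m *
  (mu p' ^+ a (inord p') * \prod_(k | (k != ord_max) && (k != inord p')) mu k ^+ a k).
Arguments wc {R p'}.

Lemma Fpow (R : rcfType) d p' (F : {mpoly R[i][d]} -> {mpoly R[i][d]})
  (L : nat -> {mpoly R[i][d]}) (mu : nat -> R[i]) (nu om : R[i]) :
  (forall x y, F (x * y) = F x * F y) -> F 1 = 1 ->
  (forall k, (k < p'.+1)%N -> F (L k) = mu k *: L k) ->
  F (L p'.+1) = nu *: L p'.+1 + om *: L p' ->
  forall a : 'X_{1..p'.+2}, F (Lpow L a) =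
    \sum_(m < (a ord_max).+1) wc mu nu om a m *: Lpow L (sh a m).
Proof.
move=> FM F1 FL FLr a.
have FX : forall x n, F (x ^+ n) = F x ^+ n.
  by move=> x; elim=> [|n IH]; rewrite ?expr0 ?F1 // !exprS FM IH.
have iq : (inord p' : 'I_p'.+2) = p' :> nat by rewrite inordK.
rewrite /Lpow (big_morph F FM F1) split_big /=.
change (nat_of_ord (@ord_max p'.+1)) with p'.+1; rewrite !FX FLr.
rewrite (eq_bigr (fun k : 'I_p'.+2 => (mu k ^+ a k) *: L k ^+ a k)); last first.
  move=> k /andP [kr kq]; rewrite FX FL ?exprZn //.
  have kr' : (k : nat) != p'.+1 by apply: contra kr => /eqP e; apply/eqP/val_inj.
  have := ltn_ord k; lia.
rewrite iq FL // exprZn scaler_prod exprDn.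
rewrite mulr_suml; apply: eq_bigr => m _.
rewrite /wc split_big /= !mnmE eqxx.
have qr : (inord p' == ord_max :> 'I_p'.+2) = false.
  by apply/negbTE/eqP => /(congr1 val) /=; rewrite inordK //; lia.
rewrite qr eqxx iq.
have -> : \prod_(k < p'.+2 | (k != ord_max) && (k != inord p')) L k ^+ sh a m k
   = \prod_(k < p'.+2 | (k != ord_max) && (k != inord p')) L k ^+ a k.
  by apply: eq_bigr => k /andP [/negbTE kr /negbTE kq]; rewrite /sh mnmE kr kq.
rewrite -scaler_nat !exprZn; do 3 rewrite -?scalerAl -?scalerAr; rewrite !scalerA exprD.
congr (_ *: _); last by ring.
rewrite [RHS]/(GRing.scale _ _) /=. ring.
Qed.

Lemma lerX_nn (R : numDomainType) (y x : R) n : 0 <= y -> y <= x -> y ^+ n <= x ^+ n.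
Proof. move=> y0 yx; apply: lerXn2r => //; rewrite qualifE /= //; exact: le_trans yx. Qed.

Lemma wc_bound (R : rcfType) p' (mu : nat -> R[i]) (nu om x : R[i]) (a : 'X_{1..p'.+2}) m :
  0 <= x -> (forall k, (k < p'.+1)%N -> `|mu k| <= x) -> `|nu| <= x -> `|om| <= x ->
  (m <= a ord_max)%N ->
  `|wc mu nu om a m| <= ('C(a ord_max, m))%:R * x ^+ mdeg a.
Proof.
move=> x0 hmu hnu hom hm.
have qr : (inord p' : 'I_p'.+2) != ord_max.
  by apply/eqP => /(congr1 val) /=; rewrite inordK //; lia.
have -> : x ^+ mdeg a = x ^+ (a ord_max - m) * x ^+ m *
   (x ^+ a (inord p') * \prod_(k | (k != ord_max) && (k != inord p')) x ^+ a k).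
  rewrite prodrXr -!exprD mdegE (@split_big _ _ addn) /=; congr (x ^+ _); lia.
rewrite /wc !normrM normr_nat !normrX normr_prod -!mulrA ler_pM2l ?ltr0n ?bin_gt0 //.
rewrite !mulrA.
apply: ler_pM.
- by rewrite !mulr_ge0 ?exprn_ge0 ?normr_ge0.
- by apply: prodr_ge0 => k _; rewrite normr_ge0.
- apply: ler_pM.
  + by rewrite !mulr_ge0 ?exprn_ge0 ?normr_ge0.
  + by rewrite exprn_ge0.
  + by apply: ler_pM; rewrite ?exprn_ge0 ?normr_ge0 //; apply: lerX_nn.
  + by apply: lerX_nn => //; apply: hmu; lia.
apply: ler_prod => k /andP [kr kq]; rewrite normr_ge0 normrX /=; apply: lerX_nn => //.
apply: hmu.
have kr' : (k : nat) != p'.+1 by apply: contra kr => /eqP e; apply/eqP/val_inj.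
have := ltn_ord k; lia.
Qed.

Lemma fin_choice (P : nat -> nat -> Prop) n :
  (forall k, (k < n)%N -> exists J, forall j, (J <= j)%N -> P k j) ->
  exists J, forall k, (k < n)%N -> forall j, (J <= j)%N -> P k j.
Proof.
elim: n => [|n IH] H; first by exists 0%N.
have [J1 H1] := IH (fun k hk => H k (ltnW hk)).
have [J2 H2] := H n (ltnSn n).
exists (maxn J1 J2) => k hk j hj.
rewrite ltnS leq_eqVlt in hk; case/orP: hk => [/eqP -> | hk].
  by apply: H2; apply: leq_trans hj; rewrite leq_maxr.
by apply: H1 => //; apply: leq_trans hj; rewrite leq_maxl.
Qed.

Lemma split_sum p' (f : 'I_p'.+2 -> nat) :
  (\sum_k f k = f ord_max + (f (inord p') + \sum_(k | (k != ord_max) && (k != inord p')) f k))%N.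
Proof. exact: (@split_big _ _ addn). Qed.

Lemma sh_mdeg p' (a : 'X_{1..p'.+2}) m : (m <= a ord_max)%N -> mdeg (sh a m) = mdeg a.
Proof.
move=> hm.
have qr : (inord p' == ord_max :> 'I_p'.+2) = false.
  by apply/negbTE/eqP => /(congr1 val) /=; rewrite inordK //; lia.
rewrite !mdegE !split_sum /sh !mnmE eqxx qr eqxx.
rewrite [X in (_ + (_ + X))%N = _](eq_bigr (fun k => a k)); last first.
  by move=> k /andP [/negbTE kr /negbTE kq]; rewrite mnmE kr kq.
rewrite [(a (inord p') + m)%N]addnC -[(m + a (inord p') + _)%N]addnA addnA subnK //.

Qed.

Lemma sh_inj p' (a a' : 'X_{1..p'.+2}) m : (m <= a ord_max)%N -> (m <= a' ord_max)%N ->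
  sh a m = sh a' m -> a = a'.
Proof.
move=> h1 h2 /mnmP e; apply/mnmP => k; have := e k; rewrite /sh !mnmE.
case: eqP => [->|_]; first lia.
by case: eqP => _; lia.
Qed.

Lemma amax_le p' (a : 'X_{1..p'.+2}) : (a ord_max <= mdeg a)%N.
Proof. by rewrite mdegE (@split_big _ _ addn) leq_addr. Qed.
Lemma asymR (R : realType) (t : R) : 0 <= t -> t < 1 ->
  exists J, forall j, (J <= j)%N -> j%:R * t ^+ j.-1 <= 4^-1.
Proof.
move=> t0 t1; have [->|tn0] := eqVneq t 0.
  exists 2%N => j hj; rewrite expr0n; case: j hj => [|[|j]] //= _.
  by rewrite mulr0 invr_ge0.
have tp : 0 < t by rewrite lt_def tn0.
set u := t^-1; set h := u - 1.
have u1 : 1 < u by rewrite invf_gt1.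
have hp : 0 < h by rewrite subr_gt0.
have up : 0 < u by lra.
have Hb : forall j, ('C(j,2))%:R * h^+2 <= u^+j.
  move=> j; have -> : u = h + 1 by rewrite /h subrK.
  rewrite exprD1n; case: j => [|[|j]]; first by rewrite bin0n mul0r sumr_ge0 // => i _; rewrite mulrn_wge0 // exprn_ge0 // ltW.
    by rewrite bin_small // mul0r sumr_ge0 // => i _; rewrite mulrn_wge0 // exprn_ge0 // ltW.
  rewrite (bigD1 (inord 2)) //= inordK // [X in X <= _]mulrC mulr_natr lerDl.
  by rewrite sumr_ge0 // => i _; rewrite mulrn_wge0 // exprn_ge0 // ltW.
pose K := Num.bound (8 * u / h^+2).
have HK : 8 * u / h^+2 < K%:R by apply: archi_boundP; rewrite divr_ge0 ?mulr_ge0 ?exprn_ge0 //; lra.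
exists K.+2 => j hj.
have jgt : (1 < j)%N by apply: leq_trans hj.
have Ht : t ^+ j.-1 = u * t ^+ j.
  by case: j jgt {hj} => [|j] //= _; rewrite exprS mulrA mulVf ?mul1r.
have Htj : t ^+ j = (u ^+ j)^-1 by rewrite exprVn invrK.
have ujp : 0 < u ^+ j by rewrite exprn_gt0.
rewrite Ht Htj mulrA ler_pdivrMr //.
have Hc : 2 * ('C(j,2))%:R = j%:R * (j.-1)%:R :> R.
  have e : (2 * 'C(j,2) = j * j.-1)%N by rewrite -mul_bin_diag bin1.
  by rewrite -natrM e natrM.
have Hm : 8 * u <= (j.-1)%:R * h^+2.
  rewrite -ler_pdivrMr ?exprn_gt0 //; apply: (le_trans (ltW HK)); rewrite ler_nat.
  lia.
have := Hb j; set c := ('C(j,2))%:R in Hc *; set J := j%:R in Hc *; set m := (j.-1)%:R in Hc Hm *.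
have J0 : 0 <= J by rewrite ler0n.
set H2 := h ^+ 2 in Hm *; set U := u ^+ j.
move=> hb.
nra.
Qed.
Local Open Scope complex_scope.
Lemma asymR2 (R : realType) (t : R) : 0 <= t -> t < 1 ->
  exists J, forall j, (J <= j)%N -> j%:R * t ^+ j.-1 <= 4^-1 /\ t ^+ j <= 4^-1.
Proof.
move=> t0 t1; have [J HJ] := @asymR R t t0 t1; exists J.+1 => j hj.
have h := HJ j (ltnW hj); split => //; apply: le_trans h.
clear HJ; case: j hj => [|j] // _ /=; rewrite exprS mulrC.
have tj : 0 <= t ^+ j by rewrite exprn_ge0.
have j1 : 1 <= (j.+1)%:R :> R by rewrite ler1n.
nra.
Qed.
Lemma asymC (R : realType) (z : R[i]) : `|z| < 1 ->
  exists J, forall j, (J <= j)%N -> `|j%:R * z ^+ j.-1| <= 4^-1 /\ `|z ^+ j| <= 4^-1.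
Proof.
move=> z1; have e := RRe_real (normr_real z); set t := complex.Re `|z| in e.
have t0 : 0 <= t.
  have : (0:R)%:C <= t%:C by rewrite e normr_ge0.
  by rewrite lecR.
have t1 : t < 1.
  have : t%:C < (1:R)%:C by rewrite e.
  by rewrite ltcR.
have [J HJ] := @asymR2 R t t0 t1; exists J => j /HJ [h1 h2].
have e4 : (4^-1 : R[i]) = (4^-1 : R)%:C by rewrite fmorphV rmorph_nat.
rewrite normrM normr_nat !normrX -e e4.
rewrite -[j%:R](rmorph_nat (real_complex R)) -!rmorphXn -rmorphM !lecR.
by [].
Qed.

Theorem mainTheorem7 (R : realType) (d p : nat)
    (A : 'M[R[i]]_d) (b : 'cV[R[i]]_d)
    (lam : nat -> R[i]) (L : nat -> {mpoly R[i][d]}) :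
  fock_bounded_symbol A b ->
  (2 <= p)%N ->
  (forall k : nat, (k < p)%N -> `|lam k| < 1) ->
  lam (p - 2)%N = lam (p - 1)%N ->
  (forall k : nat, (k < p - 1)%N -> Cphi A b (L k) = lam k *: L k) ->
  Cphi A b (L (p - 1)%N) = lam (p - 2)%N *: L (p - 1)%N + L (p - 2)%N ->
  exists J : nat, forall j : nat, (J <= j)%N -> forall n : nat,
    forall D : {set 'X_{1..p < n.+1}},
      (forall a, a \in D -> mdeg a = n) ->
      exists c : 'X_{1..p < n.+1} -> R[i],
        (forall a, `|c a| <= 1) /\
        iter j (Cphi A b) (\sum_(a in D) Lpow L a)
        = \sum_(a : 'X_{1..p < n.+1} | mdeg a == n) c a *: Lpow L a.
Proof.
move=> _ hp; case: p hp => [|[|p']] // _ hlam heq hL hLr.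
have e1 : (p'.+2 - 1 = p'.+1)%N by rewrite subSS subn0.
have e2 : (p'.+2 - 2 = p')%N by rewrite !subSS subn0.
rewrite e1 e2 in heq hL hLr.
have CM : forall x y, Cphi A b (x * y) = Cphi A b x * Cphi A b y by move=> x y; rewrite /Cphi rmorphM.
have C1 : Cphi A b 1 = 1 by rewrite /Cphi comp_mpoly1.
have CD : forall x y, Cphi A b (x + y) = Cphi A b x + Cphi A b y by move=> x y; rewrite /Cphi comp_mpolyD.
have CZ : forall (c : R[i]) x, Cphi A b (c *: x) = c *: Cphi A b x by move=> c x; rewrite /Cphi comp_mpolyZ.
have C0 : Cphi A b 0 = 0 by rewrite /Cphi comp_mpoly0.
move: (Cphi A b) CM C1 CD CZ C0 hL hLr => Cm CM C1 CD CZ C0 hL hLr.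
have FM : forall j x y, iter j Cm (x * y) = iter j Cm x * iter j Cm y.
  by elim=> [|j IH] x y //=; rewrite IH CM.
have F1 : forall j, iter j Cm 1 = 1 by elim=> [|j IH] //=; rewrite IH C1.
have FD : forall j x y, iter j Cm (x + y) = iter j Cm x + iter j Cm y.
  by elim=> [|j IH] x y //=; rewrite IH CD.
have F0 : forall j, iter j Cm 0 = 0 by elim=> [|j IH] //=; rewrite IH C0.
have FL : forall j k, (k < p'.+1)%N -> iter j Cm (L k) = lam k ^+ j *: L k.
  move=> j k hk; elim: j => [|j IH] /=; first by rewrite expr0 scale1r.
  by rewrite IH CZ hL // scalerA exprSr.
have FLr : forall j, iter j Cm (L p'.+1) =
    lam p' ^+ j *: L p'.+1 + (j%:R * lam p' ^+ j.-1) *: L p'.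
  elim=> [|j IH] /=.
    by rewrite expr0 scale1r (_ : (0%:R * _) = 0 :> R[i]) ?scale0r ?addr0 // mul0r.
  rewrite IH CD !CZ hLr hL // scalerDr !scalerA -addrA -scalerDl exprSr.
  congr (_ + _ *: _); case: j {IH} => [|j] /=; first by rewrite !mul0r addr0 mul1r.
  by rewrite -mulrA -exprSr [in RHS]mulrSr mulrDl mul1r addrC.
have [J HJ] := @fin_choice
  (fun k j => `|j%:R * lam k ^+ j.-1| <= 4^-1 /\ `|lam k ^+ j| <= 4^-1) p'.+2
  (fun k hk => @asymC R (lam k) (hlam k hk)).
exists J => j hj n D hD.
pose x : R[i] := 4^-1.
pose mu := fun k => lam k ^+ j.
pose nu := lam p' ^+ j.
pose om := j%:R * lam p' ^+ j.-1.
have FP := @Fpow R d p' (iter j Cm) L mu nu om (FM j) (F1 j) (fun k hk => FL j k hk) (FLr j).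
have x0 : 0 <= x by rewrite invr_ge0.
have hmu : forall k, (k < p'.+1)%N -> `|mu k| <= x.
  by move=> k hk; have [] := HJ k (leqW hk) j hj.
have hnu : `|nu| <= x by have [] := HJ p' (ltnW (ltnSn p'.+1)) j hj.
have hom : `|om| <= x by have [] := HJ p' (ltnW (ltnSn p'.+1)) j hj.
exists (fun be => \sum_(a in D) \sum_(m < n.+1)
   (if (m <= a ord_max)%N && ((be : 'X_{1..p'.+2}) == sh a m) then wc mu nu om a m else 0)).
split.
  move=> be.
  apply: (le_trans (ler_norm_sum _ _ _)).
  apply: (@le_trans _ _ (\sum_(a in D) \sum_(m < n.+1)
     `|if (m <= a ord_max)%N && ((be : 'X_{1..p'.+2}) == sh a m) then wc mu nu om a m else 0|)).
    by apply: ler_sum => a _; apply: ler_norm_sum.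
  rewrite exchange_big /=.
  apply: (@le_trans _ _ (\sum_(m < n.+1) ('C(n, m))%:R * x ^+ n)).
    apply: ler_sum => m _.
    case: (pickP (fun a => (a \in D) && ((m <= a ord_max)%N && ((be : 'X_{1..p'.+2}) == sh a m)))) => [a0 | none].
      move=> /andP [a0D /andP [h0 e0]].
      rewrite (bigD1 a0) //= big1 ?addr0; last first.
        move=> a /andP [aD ne]; case: ifP => [/andP [ha /eqP ea] | _]; last by rewrite normr0.
        exfalso; move/eqP: ne; apply; apply: val_inj => /=.
        by apply: (@sh_inj p' _ _ m ha h0); rewrite -ea; apply/eqP.
      rewrite h0 e0 /=.
      apply: (le_trans (@wc_bound _ p' mu nu om x a0 m x0 hmu hnu hom h0)); rewrite (hD a0 a0D).
      rewrite ler_wpM2r ?exprn_ge0 // ler_nat leq_bin2l //.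
      by have := @amax_le p' a0; rewrite (hD a0 a0D).
    rewrite big1; first by rewrite mulr_ge0 ?ler0n ?exprn_ge0.
    by move=> a aD; have := none a; rewrite aD /= => ->; rewrite normr0.
  rewrite -mulr_suml.
  have -> : \sum_(m < n.+1) ('C(n, m))%:R = (2 : R[i]) ^+ n.
    rewrite -[2]/(1 + 1 : R[i]) exprD1n; apply: eq_bigr => m _.
    by rewrite expr1n.
  rewrite -exprMn; apply: exprn_ile1.
    by rewrite mulr_ge0 ?ler0n.
  by rewrite /x ler_pdivrMr ?ltr0n // mul1r ler_nat.
rewrite (big_morph _ (FD j) (F0 j)).
under eq_bigr => a _ do rewrite FP.
symmetry.
transitivity (\sum_(be : 'X_{1..p'.+2 < n.+1} | mdeg be == n) \sum_(a in D) \sum_(m < n.+1)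
   (if (m <= a ord_max)%N && ((be : 'X_{1..p'.+2}) == sh a m) then wc mu nu om a m else 0) *: Lpow L be).
  apply: eq_bigr => be _; apply: (etrans (scaler_suml _ _ _ _)); apply: eq_bigr => a _.
  exact: scaler_suml.
rewrite exchange_big /=; apply: eq_bigr => a aD.
rewrite exchange_big /=.
have arn : ((a ord_max).+1 <= n.+1)%N.
  by rewrite ltnS; have := @amax_le p' a; rewrite (hD a aD).
rewrite (big_ord_widen _ (fun m => wc mu nu om a m *: Lpow L (sh a m)) arn) [RHS]big_mkcond /=.
apply: eq_bigr => m _.
case: (leqP m (a ord_max)) => hm /=.
  have smd : (mdeg (sh a m) < n.+1)%N by rewrite sh_mdeg // (hD a aD).
  pose b0 : 'X_{1..p'.+2 < n.+1} := BMultinom smd.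
  rewrite ltnS hm (bigD1 b0) /=; last by rewrite sh_mdeg // (hD a aD).
  rewrite eqxx big1 ?addr0 // => be /andP [_ ne].
  case: eqP => [e|_]; last by rewrite scale0r.
  by exfalso; move/eqP: ne; apply; apply: val_inj.
have hm' : (m <= a ord_max)%N = false by rewrite leqNgt hm.
rewrite ltnS hm' /=.
by rewrite big1 // => be _; rewrite scale0r.
Qed.
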